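(* For $(\lambda,z)\in(0,1]\times(0,1]$, the $2N\times2N$ matrix $$K(\lambda,z)=\begin{pmatrix}0&B(1;\lambda,z)\\ B(-1;\lambda,z)&0\end{pmatrix}$$ has non-negative entries and is irreducible. For $(\lambda,z)\in(0,1)\times(0,1]$, the spectral radius of $K(\lambda,z)$ is strictly less than $1$.
   Context: Fix an integer $N\ge 3$. Let $\mathcal G_N$ be the groupoid with object set $\{1,\dots,N\}$ generated by arrows $A_{i,j}^{(k)}$, $i\neq j\in\{1,\dots,N\}$, $k\in\{-1,1\}$, with source $i$ and target $j$, subject to the relations $A_{i,j}^{(k)}A_{j,\ell}^{(k)}=A_{i,\ell}^{(k)}$ for all $i,j,\ell$, $k$, with the convention $A_{i,i}^{(k)}:=e_i$ (unit at object $i$). Let $\mathcal A$ be its arrow set. Every arrow has a unique reduced representation: either empty or $\prod_{\ell=1}^dA_{i_\ell,j_\ell}^{(k_\ell)}$ with alternating upper indices and $i_\ell\ne j_\ell$. A metric $|\cdot|_{\mathcal K}$ is given by values $|A_{i,j}^{(k)}|_{\mathcal K}\ge0$ on generators, $|e_i|_{\mathcal K}=0$, and $|w|_{\mathcal K}=\sum_\ell|A_{i_\ell,j_\ell}^{(k_\ell)}|_{\mathcal K}$ over the reduced representation of $w$. Let $\{W_n\}_{n\ge0}$ be the Markov chain on $\mathcal A$ with $P(W_{n+1}=y\mid W_n=x)=p_{i,j}^{(k)}$ if $x^{-1}y=A_{i,j}^{(k)}$ with $i\ne j$ and $0$ otherwise, where $p_{i,j}^{(k)}\in(0,1)$ and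 $\sum_{j\ne i}\sum_{k=\pm1}p_{i,j}^{(k)}=1$ for each $i$; $E_x$ denotes expectation with $W_0=x$. For $x\in\mathcal A$ let $T(0,x)=\inf\{n\ge0:W_n=W_0x\}$ (possibly $\infty$), and $R_{i,j}^{(k)}(\lambda)=E_{e_i}[\lambda^{T(0,A_{i,j}^{(k)})}]$ for $\lambda\in(0,1]$. Let $B(k;\lambda,z)$ be the $N\times N$ matrix with entries $[B(k;\lambda,z)]_{i,j}=(1-\delta_{i,j})z^{|A_{i,j}^{(k)}|_{\mathcal K}}R_{i,j}^{(k)}(\lambda)$. *)

(* Defs.v *)
From mathcomp Require Import all_boot all_order all_algebra.
From mathcomp Require Import all_classical all_reals all_analysis.
From mathcomp Require Import complex.
Set Implicit Arguments. Unset Strict Implicit. Unset Printing Implicit Defensive.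
Import Order.TTheory GRing.Theory Num.Theory.
Local Open Scope ring_scope.

(* Objects {1,..,N} are 'I_N.  The upper index k in {-1,1} is encoded by a
   boolean: true <-> k = 1, false <-> k = -1.
   A generator A_{i,j}^{(k)} is the letter (i, j, k). *)
Definition letter (N : nat) := ('I_N * 'I_N * bool)%type.

(* An arrow with source i0 is represented by its reduced representation
   (alternating upper indices, i_l <> j_l, composable), stored in REVERSE
   order (most recent letter first); the empty word is e_{i0}. *)

Definition target N (i0 : 'I_N) (rw : seq (letter N)) : 'I_N :=
  if rw is (a, b, k) :: _ then b else i0.

(* right multiplication of a reduced word (with target i) by the generator
   A_{i,j}^{(k)}, i <> j, computed with the relations
   A_{a,i}^{(k)} A_{i,j}^{(k)} = A_{a,j}^{(k)} and A_{a,a}^{(k)} = e_a. *)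
Definition mulgen N (rw : seq (letter N)) (g : letter N) : seq (letter N) :=
  let: (i, j, k) := g in
  match rw with
  | [::] => [:: (i, j, k)]
  | (a, b, k') :: rest =>
      if k' == k then (if a == j then rest else (a, j, k) :: rest)
      else (i, j, k) :: rw
  end.

(* hitprob p i0 tw n rw = P(first time n >= 0 at which the chain, currently
   at the arrow rw (source i0), is at tw equals n), where the chain moves
   from x to x A_{t,j}^{(k)} (t = target of x, j <> t) with probability
   p t j k. *)
Fixpoint hitprob (R : realType) N (p : 'I_N -> 'I_N -> bool -> R)
  (i0 : 'I_N) (tw : seq (letter N)) (n : nat) (rw : seq (letter N)) : R :=
  match n with
  | 0 => if rw == tw then 1 else 0
  | n'.+1 =>
      if rw == tw then 0 else
      let t := target i0 rw in
      \sum_(j < N | j != t) \sum_(k : bool)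
         p t j k * hitprob p i0 tw n' (mulgen rw (t, j, k))
  end.

(* R_{i,j}^{(k)}(lambda) = E_{e_i}[lambda^{T(0, A_{i,j}^{(k)})}]
   = sum_{n >= 0} lambda^n P_{e_i}(T = n)   (convention lambda^oo = 0). *)
Definition Rgen (R : realType) N (p : 'I_N -> 'I_N -> bool -> R)
  (i j : 'I_N) (k : bool) (lam : R) : R :=
  limn (fun n => \sum_(0 <= m < n) lam ^+ m * hitprob p i [:: (i, j, k)] m [::]).

(* the matrix B(k; lambda, z); len i j k = |A_{i,j}^{(k)}|_K *)
Definition Bmx (R : realType) N (p : 'I_N -> 'I_N -> bool -> R)
  (len : 'I_N -> 'I_N -> bool -> R) (k : bool) (lam z : R) : 'M[R]_N :=
  \matrix_(i, j) ((1 - (i == j)%:R) * (z `^ (len i j k)) * Rgen p i j k lam).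

Definition Kmx (R : realType) N (p : 'I_N -> 'I_N -> bool -> R)
  (len : 'I_N -> 'I_N -> bool -> R) (lam z : R) : 'M[R]_(N + N) :=
  block_mx 0 (Bmx p len true lam z) (Bmx p len false lam z) 0.

Definition nonneg_mx (R : realType) n (A : 'M[R]_n) : Prop :=
  forall i j, 0 <= A i j.

Definition irreducible_mx (R : realType) n (A : 'M[R]_n) : Prop :=
  forall i j, exists m : nat, 0 < (A ^+ m) i j.

Definition eigenvalueC (R : realType) n (A : 'M[R]_n) (mu : R[i]) : bool :=
  root (char_poly (map_mx (fun x : R => (x%:C)%C) A)) mu.

Definition spectral_radius (R : realType) n (A : 'M[R]_n) : R :=
  sup [set ComplexField.Normc.normc mu | mu in [set mu | eigenvalueC A mu]]%classic.

(* Main.v *)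
Require Import Defs.
From mathcomp Require Import all_boot all_order all_algebra.
From mathcomp Require Import all_classical all_reals all_analysis.
From mathcomp Require Import complex.
From mathcomp Require Import zify.
Import Order.TTheory GRing.Theory Num.Theory.
Import numFieldNormedType.Exports.
Set Implicit Arguments. Unset Strict Implicit. Unset Printing Implicit Defensive.
Local Open Scope ring_scope.

Section Words.
Variable N : nat.
Local Notation word := (seq (letter N)).

Fixpoint wf (i0 : 'I_N) (w : word) : bool :=
  match w with
  | [::] => true
  | (a, b, k) :: rest => [&& a != b, a == target i0 rest, wf i0 rest &
        (if rest is (_, _, k') :: _ then k' != k else true)]
  end.

Lemma mulgen_wf i0 rw j k : wf i0 rw -> j != target i0 rw ->
  wf i0 (mulgen rw (target i0 rw, j, k)) /\ target i0 (mulgen rw (target i0 rw, j, k)) = j.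
Proof.
case: rw => [|[[a b] k'] rest] /=; first by move=> _ jt; rewrite eq_sym jt eqxx.
case/and4P=> ab /eqP hat wr alt jb.
case: eqP => [<-|kk].
  case: eqP => [ja|ja]; first by subst; split=> //.
  split=> //=; rewrite hat eqxx wr alt andbT /=.
  by rewrite andbT -hat; apply/eqP.
split=> //=; rewrite eq_sym jb eqxx ab -hat eqxx wr alt /=.
by apply/eqP=> e; apply: kk; rewrite e.
Qed.

Lemma mulgen_merge i0 w a b j k : wf i0 w -> target i0 w = a -> a != b -> b != j ->
  mulgen (mulgen w (a, b, k)) (b, j, k) = if a == j then w else mulgen w (a, j, k).
Proof.
case: w => [|[[c d] k2] r] /=.
  by move=> _ _ _ _; rewrite eqxx; case: (a == j).
case/and4P=> cd /eqP cr wr alt da ab bj; subst d.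
case: (eqVneq k2 k) => [e|ne]; last first.
  by rewrite eqxx.
subst k2.
case: (eqVneq c b) => [cb|cb].
  rewrite cb (negbTE bj).
  by case: (eqVneq a j) => [<-|aj]; case: r {cd cr wr} alt => [|[[e f] k3] r'] //= alt;
    rewrite (negbTE alt).
rewrite eqxx; case: (eqVneq a j) => [<-|//].
by rewrite (negbTE cd).
Qed.

Definition lmul (x y : word) : word := foldr (fun g acc => mulgen acc g) x y.

Lemma lmul_wf i0 x y : wf i0 x -> wf (target i0 x) y ->
  wf i0 (lmul x y) /\ target i0 (lmul x y) = target (target i0 x) y.
Proof.
move=> wx; elim: y => [|[[a b] k] y IH] //= /and4P[ab /eqP ay wy _].
have [w1 t1] := IH wy.
have := @mulgen_wf i0 (lmul x y) b k w1.
by rewrite t1 -ay eq_sym ab => /(_ isT).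
Qed.

Lemma lmul_mulgen i0 x y j k : wf i0 x -> wf (target i0 x) y ->
  j != target (target i0 x) y ->
  lmul x (mulgen y (target (target i0 x) y, j, k)) =
  mulgen (lmul x y) (target (target i0 x) y, j, k).
Proof.
move=> wx; case: y => [|[[a b] k'] rest] //= /and4P[ab /eqP ar wr alt] bj.
rewrite -[RHS]/(mulgen (mulgen (lmul x rest) (a,b,k')) (b,j,k)).
case: (eqVneq k' k) => [e|ne] //.
subst k'.
have [w1 t1] := lmul_wf wx wr.
rewrite (@mulgen_merge i0 (lmul x rest) a b j k w1) ?t1 //.
  by case: (a == j).
by rewrite eq_sym.
Qed.

Lemma lmul_nil t y : wf t y -> lmul [::] y = y.
Proof.
elim: y => [|[[a b] k] y IH] //= /and4P[ab /eqP ay wy alt].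
rewrite IH //; case: y {IH} ay wy alt => [|[[c d] k2] y'] //= _ _ alt.
by rewrite (negbTE alt).
Qed.

Lemma lmul_assoc i0 a b y : wf i0 a -> wf (target i0 a) b ->
  wf (target (target i0 a) b) y ->
  lmul a (lmul b y) = lmul (lmul a b) y.
Proof.
move=> wa wb; elim: y => [|[[c d] k] y IH] // /and4P[cd /eqP cy wy alt].
change (lmul a (mulgen (lmul b y) (c,d,k)) = mulgen (lmul (lmul a b) y) (c,d,k)).
rewrite -IH //.
have [w1 t1] := lmul_wf wb wy.
have := @lmul_mulgen i0 a (lmul b y) d k wa.
rewrite t1 -cy eq_sym cd => /(_ w1 isT).
by move=> <-.
Qed.

Fixpoint inv (x : word) : word :=
  match x with
  | [::] => [::]
  | (a, b, k) :: x' => lmul [:: (b, a, k)] (inv x')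
  end.

Lemma inv_props i0 x : wf i0 x ->
  [/\ wf (target i0 x) (inv x), target (target i0 x) (inv x) = i0 &
      lmul (inv x) x = [::]].
Proof.
elim: x => [|[[a b] k] x IH] // /and4P[ab /eqP ax wx alt].
subst a.
have [w1 t1 l1] := IH wx.
have wba : wf b [:: (b, target i0 x, k)] by rewrite /= eq_sym ab eqxx.
have := @lmul_wf b _ (inv x) wba; rewrite /= => /(_ w1) [w2 t2].
split => //; first by rewrite t2.
change (mulgen (lmul (lmul [:: (b, target i0 x, k)] (inv x)) x) (target i0 x, b, k) = [::]).
rewrite -(@lmul_assoc b) //=; last by rewrite t1.
by rewrite l1 /= !eqxx.
Qed.

Lemma lmul_inj i0 x y1 y2 : wf i0 x -> wf (target i0 x) y1 -> wf (target i0 x) y2 ->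
  lmul x y1 = lmul x y2 -> y1 = y2.
Proof.
move=> wx w1 w2 e.
have [wi ti li] := inv_props wx.
rewrite -(lmul_nil w1) -(lmul_nil w2) -li.
rewrite -(@lmul_assoc (target i0 x)) ?ti // e.
by rewrite (@lmul_assoc (target i0 x)) ?ti.
Qed.

End Words.

Section Walk.
Variable R : realType.
Variable N : nat.
Variable p : 'I_N -> 'I_N -> bool -> R.
Local Notation word := (seq (letter N)).

Lemma hit_trans i0 x tw m y : wf i0 x -> wf (target i0 x) tw -> wf (target i0 x) y ->
  hitprob p (target i0 x) tw m y = hitprob p i0 (lmul x tw) m (lmul x y).
Proof.
move=> wx wtw; elim: m y => [|m IH] y wy /=.
  have -> : (lmul x y == lmul x tw) = (y == tw).
    by apply/eqP/eqP => [/(lmul_inj wx wy wtw)|->].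
  by [].
have -> : (lmul x y == lmul x tw) = (y == tw).
  by apply/eqP/eqP => [/(lmul_inj wx wy wtw)|->].
case: (y == tw) => //.
have [w1 t1] := lmul_wf wx wy.
rewrite t1; apply: eq_bigr => j jt; apply: eq_bigr => k _.
have [w2 _] := mulgen_wf k wy jt.
by rewrite IH // (lmul_mulgen k wx wy jt).
Qed.

End Walk.

Section Gen.
Variable R : realType.
Variable N : nat.
Variable p : 'I_N -> 'I_N -> bool -> R.
Hypothesis p_ge0 : forall i j k, i != j -> 0 <= p i j k.
Hypothesis p_sum : forall i, \sum_(j < N | j != i) \sum_(k : bool) p i j k = 1.
Variable i0 : 'I_N.
Variable lam : R.
Hypothesis lam_ge0 : 0 <= lam.
Local Notation word := (seq (letter N)).

Definition stepE (g : word -> R) (rw : word) : R :=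
  \sum_(j < N | j != target i0 rw) \sum_(k : bool)
     p (target i0 rw) j k * g (mulgen rw (target i0 rw, j, k)).

Lemma stepE_ge0 g rw : (forall w, 0 <= g w) -> 0 <= stepE g rw.
Proof.
move=> g0; apply: sumr_ge0 => j jt; apply: sumr_ge0 => k _.
by apply: mulr_ge0 => //; apply: p_ge0; rewrite eq_sym.
Qed.

Lemma stepE_le g g' rw : (forall w, g w <= g' w) -> stepE g rw <= stepE g' rw.
Proof.
move=> gg; apply: ler_sum => j jt; apply: ler_sum => k _.
by apply: ler_wpM2l => //; apply: p_ge0; rewrite eq_sym.
Qed.

Lemma stepE_cst c rw : stepE (fun _ => c) rw = c.
Proof.
rewrite /stepE -[RHS]mul1r -(p_sum (target i0 rw)) mulr_suml.
by apply: eq_bigr => j _; rewrite mulr_suml.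
Qed.

Lemma stepE_scale a g rw : stepE (fun w => a * g w) rw = a * stepE g rw.
Proof.
rewrite /stepE mulr_sumr; apply: eq_bigr => j _; rewrite mulr_sumr.
by apply: eq_bigr => k _; rewrite mulrCA.
Qed.

Lemma stepE_sum (I : Type) (r : seq I) (P : pred I) (F : I -> word -> R) rw :
  stepE (fun w => \sum_(i <- r | P i) F i w) rw = \sum_(i <- r | P i) stepE (F i) rw.
Proof.
rewrite /stepE [RHS]exchange_big; apply: eq_bigr => j _.
rewrite [RHS]exchange_big; apply: eq_bigr => k _.
by rewrite mulr_sumr.
Qed.

Lemma hitprobS tw n rw : hitprob p i0 tw n.+1 rw = if rw == tw then 0 else stepE (hitprob p i0 tw n) rw.
Proof. by []. Qed.

Fixpoint Gf (n : nat) (f : word -> R) (rw : word) : R :=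
  match n with
  | 0 => 0
  | n'.+1 => f rw + lam * \sum_(j < N | j != target i0 rw) \sum_(k : bool)
     p (target i0 rw) j k * Gf n' f (mulgen rw (target i0 rw, j, k))
  end.

Lemma GfS n f rw : Gf n.+1 f rw = f rw + lam * stepE (Gf n f) rw.
Proof. by []. Qed.

Lemma Gf_ge0 n f rw : (forall w, 0 <= f w) -> 0 <= Gf n f rw.
Proof.
move=> f0; elim: n rw => [|n IH] rw //; rewrite GfS.
by apply: addr_ge0 => //; apply: mulr_ge0 => //; apply: stepE_ge0.
Qed.

Lemma Gf_le1 n f rw : lam < 1 -> (forall w, f w <= 1) -> Gf n f rw <= (1 - lam)^-1.
Proof.
move=> l1 f1; have l0 : 0 < 1 - lam by rewrite subr_gt0.
elim: n rw => [|n IH] rw; first by rewrite /= invr_ge0 ltW.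
rewrite GfS; apply: (@le_trans _ _ (1 + lam * (1 - lam)^-1)).
  apply: lerD => //; apply: ler_wpM2l => //.
  by rewrite -[X in _ <= X](stepE_cst _ rw); apply: stepE_le.
rewrite -[X in X + _](divff (lt0r_neq0 l0)) -mulrDl.
by rewrite subrK mul1r.
Qed.

Lemma Gf_monof n f g rw : (forall w, f w <= g w) -> Gf n f rw <= Gf n g rw.
Proof.
move=> fg; elim: n rw => [|n IH] rw //; rewrite !GfS.
by apply: lerD => //; apply: ler_wpM2l => //; apply: stepE_le.
Qed.

Lemma Gf_monon n n' f rw : (forall w, 0 <= f w) -> (n <= n')%N -> Gf n f rw <= Gf n' f rw.
Proof.
move=> f0; elim: n n' rw => [|n IH] [|n'] rw //= nn'.
  by apply: (Gf_ge0 n'.+1).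
rewrite -!/(stepE _ rw).
by apply: lerD => //; apply: ler_wpM2l => //; apply: stepE_le => w; apply: IH.
Qed.

Lemma Gf_sum (I : Type) (r : seq I) (P : pred I) (F : I -> word -> R) n rw :
  Gf n (fun w => \sum_(i <- r | P i) F i w) rw = \sum_(i <- r | P i) Gf n (F i) rw.
Proof.
elim: n rw => [|n IH] rw; first by rewrite big1.
rewrite GfS.
have -> : Gf n (fun w => \sum_(i <- r | P i) F i w) = fun w => \sum_(i <- r | P i) Gf n (F i) w.
  by apply: funext => w; exact: IH.
rewrite stepE_sum mulr_sumr -big_split /=.
by apply: eq_bigr => i _.
Qed.


Lemma hit_ge0 tw n rw : 0 <= hitprob p i0 tw n rw.
Proof.
elim: n rw => [|n IH] rw /=; first by case: (rw == tw).
by case: (rw == tw) => //; apply: stepE_ge0.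
Qed.

Definition Fh (T : nat) (y rw : word) : R := \sum_(m < T) lam ^+ m * hitprob p i0 y m rw.

Lemma Fh_ge0 T y rw : 0 <= Fh T y rw.
Proof. by apply: sumr_ge0 => m _; apply: mulr_ge0; [apply: exprn_ge0|apply: hit_ge0]. Qed.

Lemma Fh_S T y rw : Fh T.+1 y rw = if rw == y then 1 else lam * stepE (Fh T y) rw.
Proof.
rewrite /Fh big_ord_recl expr0 mul1r.
case: (eqVneq rw y) => [->|ne].
  rewrite big1 ?addr0; first by rewrite /= eqxx.
  by move=> i _; rewrite hitprobS eqxx mulr0.
rewrite [hitprob _ _ _ 0 _]/= (negbTE ne) add0r.
under eq_bigr => i _ do rewrite hitprobS (negbTE ne) exprS -mulrA.
rewrite -mulr_sumr; congr (_ * _).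
rewrite stepE_sum; apply: eq_bigr => i _.
by rewrite stepE_scale.
Qed.

Lemma FG T T' y f rw : (forall w, 0 <= f w) ->
  Fh T y rw * Gf T' f y <= Gf (T + T') f rw.
Proof.
move=> f0; elim: T rw => [|T IH] rw.
  by rewrite /Fh big_ord0 mul0r; apply: Gf_ge0.
rewrite Fh_S; case: (eqVneq rw y) => [->|ne].
  by rewrite mul1r; apply: Gf_monon => //; rewrite leq_addl.
rewrite addSn GfS -mulrA -[X in X <= _]add0r; apply: lerD => //.
apply: ler_wpM2l => //.
rewrite mulrC -stepE_scale; apply: stepE_le => w.
by rewrite mulrC; apply: IH.
Qed.

End Gen.

Lemma sum_pred1_le (R : realType) (I : finType) (P : pred I) (b : I) :
  \sum_(j | P j) ((j == b)%:R : R) <= 1.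
Proof.
rewrite big_mkcond /= (bigD1 b) //= eqxx big1 ?addr0; first by case: (P b).
by move=> j /negbTE ->; case: (P j).
Qed.

Lemma sum_size_eq (R : realType) (s M : nat) :
  \sum_(n < M) ((s == n)%:R : R) = (s < M)%:R.
Proof.
elim: M => [|M IH]; first by rewrite big_ord0.
rewrite big_ord_recr /= IH ltnS.
by case: ltngtP => //= _; rewrite ?addr0 ?add0r.
Qed.

Section Paths.
Variable R : realType.
Variable N : nat.
Variable p : 'I_N -> 'I_N -> bool -> R.
Hypothesis p_ge0 : forall i j k, i != j -> 0 <= p i j k.
Hypothesis p_sum : forall i, \sum_(j < N | j != i) \sum_(k : bool) p i j k = 1.
Variable lam : R.
Hypothesis lam_ge0 : 0 <= lam.
Local Notation word := (seq (letter N)).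

Definition RT (T : nat) (t j : 'I_N) (k : bool) : R :=
  \sum_(m < T) lam ^+ m * hitprob p t [:: (t, j, k)] m [::].

Fixpoint Spath (T n : nat) (t : 'I_N) (k : bool) : R :=
  match n with
  | 0 => 1
  | n'.+1 => \sum_(j < N | j != t) RT T t j k * Spath T n' j (~~ k)
  end.

Variable i0 : 'I_N.

Fixpoint ind (n : nat) (rw0 : word) (k : bool) (w : word) : R :=
  match n with
  | 0 => (w == rw0)%:R
  | n'.+1 => \sum_(j < N | j != target i0 rw0) ind n' ((target i0 rw0, j, k) :: rw0) (~~ k) w
  end.

Lemma ind_ge0 n rw0 k w : 0 <= ind n rw0 k w.
Proof.
elim: n rw0 k => [|n IH] rw0 k /=; first by rewrite ler0n.
by apply: sumr_ge0 => j _.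
Qed.

Lemma ind_le n rw0 k w :
  ind n rw0 k w <= ((size w == (n + size rw0)%N) && (drop n w == rw0))%:R.
Proof.
elim: n rw0 k => [|n IH] rw0 k /=.
  by rewrite drop0; case: eqP => [->|_]; rewrite ?eqxx ?ler0n.
apply: (@le_trans _ _ (\sum_(j < N | j != target i0 rw0)
   ((size w == (n + (size rw0).+1)%N) && (drop n w == (target i0 rw0, j, k) :: rw0))%:R)).
  by apply: ler_sum => j _; apply: IH.
have -> : drop n.+1 w = behead (drop n w) by rewrite -add1n -drop_drop drop1.
rewrite addnS.
case: (size w == (n + size rw0).+1); last by rewrite big1.
case: (drop n w) => [|[[a b] c] r] /=; first by rewrite big1.
case: (eqVneq r rw0) => [->|ne]; last first.
  by rewrite big1 // => j _; rewrite eqseq_cons (negbTE ne) andbF.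
apply: (@le_trans _ _ (\sum_(j < N | j != target i0 rw0) ((j == b)%:R : R))).
  apply: ler_sum => j _; rewrite eqseq_cons eqxx andbT.
  case: eqP => [[_ -> _]|]; first by rewrite eqxx.
  by rewrite ler0n.
exact: sum_pred1_le.
Qed.

Lemma ind_sum_le M k w : \sum_(n < M) ind n [::] k w <= 1.
Proof.
apply: (@le_trans _ _ (\sum_(n < M) ((size w == n)%:R : R))).
  apply: ler_sum => n _; apply: (le_trans (ind_le _ _ _ _)).
  by rewrite /= addn0; case: (size w == n); case: (drop n w == [::]); rewrite /= ?lexx ?ler0n ?ler01.
by rewrite sum_size_eq; case: (size w < M)%N; rewrite /= ?lexx ?ler01.
Qed.


Definition alt_ok (rw0 : word) (k : bool) : bool :=
  if rw0 is (_, _, k') :: _ then k' != k else true.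

Lemma mulgen_cons rw0 a b k : alt_ok rw0 k -> mulgen rw0 (a, b, k) = (a, b, k) :: rw0.
Proof. by case: rw0 => [|[[c d] k'] r] //= /negbTE ->. Qed.

Lemma RT_Fh T rw0 j k : wf i0 rw0 -> alt_ok rw0 k -> j != target i0 rw0 ->
  RT T (target i0 rw0) j k = Fh p i0 lam T ((target i0 rw0, j, k) :: rw0) rw0.
Proof.
move=> wr ak jt; rewrite /RT /Fh; apply: eq_bigr => m _; congr (_ * _).
have wtw : wf (target i0 rw0) [:: (target i0 rw0, j, k)] by rewrite /= eq_sym jt eqxx.
rewrite (@hit_trans R N p i0 rw0 _ m [::] wr wtw isT).
change (lmul rw0 [:: (target i0 rw0, j, k)]) with (mulgen rw0 (target i0 rw0, j, k)).
by change (lmul rw0 [::]) with rw0; rewrite mulgen_cons.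
Qed.

Lemma Spath_le T n rw0 k : wf i0 rw0 -> alt_ok rw0 k ->
  Spath T n (target i0 rw0) k <= Gf p i0 lam (n * T).+1 (ind n rw0 k) rw0.
Proof.
elim: n rw0 k => [|n IH] rw0 k wr ak.
  rewrite GfS /= eqxx lerDl; apply: mulr_ge0 => //; apply: (stepE_ge0 p_ge0) => w.
  exact: lexx.
rewrite (_ : ind n.+1 rw0 k = fun w => \sum_(j < N | j != target i0 rw0)
    ind n ((target i0 rw0, j, k) :: rw0) (~~ k) w) // Gf_sum /=.
apply: ler_sum => j jt.
rewrite RT_Fh //.
have [wy ty] := mulgen_wf k wr jt; rewrite mulgen_cons // in wy ty.
have ay : alt_ok ((target i0 rw0, j, k) :: rw0) (~~ k) by case: k {IH ak wy ty}.
have := IH _ _ wy ay; rewrite ty => IHj.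
apply: le_trans (ler_wpM2l (Fh_ge0 p_ge0 _ lam_ge0 _ _ _) IHj) _.
apply: le_trans (FG p_ge0 _ lam_ge0 _ _ _ _ (@ind_ge0 _ _ _)) _.
by rewrite mulSn addnS.
Qed.

Lemma Spath_sum_le T M k : lam < 1 ->
  \sum_(n < M) Spath T n i0 k <= (1 - lam)^-1.
Proof.
move=> l1.
apply: (@le_trans _ _ (\sum_(n < M) Gf p i0 lam (M * T).+1 (ind n [::] k) [::])).
  apply: ler_sum => n _.
  apply: le_trans (@Spath_le T n [::] k isT isT) _.
  apply: (Gf_monon p_ge0 _ lam_ge0) => //; first exact: ind_ge0.
  by rewrite ltnS leq_mul2r ltnW ?orbT.
rewrite -Gf_sum; apply: (Gf_le1 p_ge0 p_sum) => // w.
exact: ind_sum_le.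
Qed.

End Paths.

Lemma sum_ge_term (R : realType) (I : finType) (P : pred I) (F : I -> R) i :
  P i -> (forall j, P j -> 0 <= F j) -> F i <= \sum_(j | P j) F j.
Proof.
move=> Pi F0; rewrite (bigD1 i) //= lerDl; apply: sumr_ge0 => j /andP[Pj _].
exact: F0.
Qed.

Section Lim.
Variable R : realType.
Variable N : nat.
Variable p : 'I_N -> 'I_N -> bool -> R.
Hypothesis p_ge0 : forall i j k, i != j -> 0 <= p i j k.
Hypothesis p_sum : forall i, \sum_(j < N | j != i) \sum_(k : bool) p i j k = 1.
Variable lam : R.
Hypothesis lam_ge0 : 0 <= lam.
Hypothesis lam_le1 : lam <= 1.
Local Notation word := (seq (letter N)).

Lemma Fh_le1 i0 T y rw : Fh p i0 lam T y rw <= 1.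
Proof.
elim: T rw => [|T IH] rw; first by rewrite /Fh big_ord0 ler01.
rewrite Fh_S; case: (rw == y) => //.
apply: (@le_trans _ _ (stepE p i0 (Fh p i0 lam T y) rw)).
  by apply: ler_piMl => //; apply: (stepE_ge0 p_ge0) => w; exact: (Fh_ge0 p_ge0).
rewrite -[X in _ <= X](stepE_cst p_sum i0 1 rw).
exact: (stepE_le p_ge0).
Qed.

Lemma RT_Fh0 T t j k : RT p lam T t j k = Fh p t lam T [:: (t, j, k)] [::].
Proof. by []. Qed.

Lemma RT_ge0 T t j k : 0 <= RT p lam T t j k.
Proof. by rewrite RT_Fh0; exact: (Fh_ge0 p_ge0). Qed.

Lemma RT_le1 T t j k : RT p lam T t j k <= 1.
Proof. by rewrite RT_Fh0; exact: Fh_le1. Qed.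

Lemma RT_nd t j k : nondecreasing_seq (fun T => RT p lam T t j k).
Proof.
apply/nondecreasing_seqP => T; rewrite /RT big_ord_recr /= lerDl.
by apply: mulr_ge0; [exact: exprn_ge0|exact: (hit_ge0 p_ge0)].
Qed.

Lemma RT_cvg t j k : cvgn (fun T => RT p lam T t j k).
Proof.
apply: nondecreasing_is_cvgn; first exact: RT_nd.
by exists 1 => _ [T _ <-]; exact: RT_le1.
Qed.

Lemma Rgen_lim t j k : Rgen p t j k lam = limn (fun T => RT p lam T t j k).
Proof.
rewrite /Rgen; have -> // : (fun n => \sum_(0 <= m < n) lam ^+ m * hitprob p t [:: (t, j, k)] m [::])
  = (fun T => RT p lam T t j k).
by apply: funext => T; rewrite big_mkord.
Qed.

Lemma RT_le_Rgen T t j k : RT p lam T t j k <= Rgen p t j k lam.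
Proof. by rewrite Rgen_lim; apply: nondecreasing_cvgn_le; [exact: RT_nd|exact: RT_cvg]. Qed.

Lemma Rgen_ge0 t j k : 0 <= Rgen p t j k lam.
Proof. exact: le_trans (RT_ge0 0 t j k) (RT_le_Rgen 0 t j k). Qed.

Lemma Rgen_pos t j k : t != j -> 0 < lam -> 0 < p t j k -> 0 < Rgen p t j k lam.
Proof.
move=> tj l0 pp; apply: lt_le_trans (RT_le_Rgen 2 t j k).
rewrite RT_Fh0 Fh_S.
have -> : ([::] == [:: (t, j, k)]) = false by [].
rewrite mulr_gt0 //.
have f0 : forall w, 0 <= Fh p t lam 1 [:: (t, j, k)] w by move=> w; exact: (Fh_ge0 p_ge0).
rewrite /stepE [target _ _]/=.
rewrite (bigD1 j) /=; last by rewrite eq_sym.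
apply: (@lt_le_trans _ _ (\sum_k0 p t j k0 * Fh p t lam 1 [:: (t, j, k)] [:: (t, j, k0)])); last first.
  rewrite lerDl; apply: sumr_ge0 => j' /andP[jt _]; apply: sumr_ge0 => k' _.
  by apply: mulr_ge0 => //; apply: p_ge0; rewrite eq_sym.
rewrite (bigD1 k) //=.
apply: (@lt_le_trans _ _ (p t j k * Fh p t lam 1 [:: (t, j, k)] [:: (t, j, k)])); last first.
  rewrite lerDl; apply: sumr_ge0 => k' _.
  by apply: mulr_ge0 => //; apply: p_ge0.
by rewrite Fh_S eqxx mulr1.
Qed.

End Lim.

Section Lim2.
Variable R : realType.
Variable N : nat.
Variable p : 'I_N -> 'I_N -> bool -> R.
Hypothesis p_ge0 : forall i j k, i != j -> 0 <= p i j k.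
Hypothesis p_sum : forall i, \sum_(j < N | j != i) \sum_(k : bool) p i j k = 1.
Variable lam : R.
Hypothesis lam_ge0 : 0 <= lam.
Hypothesis lam_lt1 : lam < 1.

Fixpoint SpathG (Rf : 'I_N -> 'I_N -> bool -> R) (n : nat) (t : 'I_N) (k : bool) : R :=
  match n with
  | 0 => 1
  | n'.+1 => \sum_(j < N | j != t) Rf t j k * SpathG Rf n' j (~~ k)
  end.

Lemma Spath_G T n t k : Spath p lam T n t k = SpathG (RT p lam T) n t k.
Proof. by elim: n t k => //= n IH t k; apply: eq_bigr => j _; rewrite IH. Qed.

Lemma SpathG_cvg n t k :
  ((fun T => SpathG (RT p lam T) n t k) @ \oo --> SpathG (fun a b c => Rgen p a b c lam) n t k)%classic.
Proof.
elim: n t k => [|n IH] t k /=; first exact: cvg_cst.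
apply: cvg_big; first exact: add_continuous.
move=> j _; apply: cvgM; last exact: IH.
rewrite Rgen_lim; exact: (RT_cvg p_ge0 p_sum lam_ge0 (ltW lam_lt1)).
Qed.

Lemma SpathG_sum_le M t k :
  \sum_(n < M) SpathG (fun a b c => Rgen p a b c lam) n t k <= (1 - lam)^-1.
Proof.
have cv : ((fun T => \sum_(n < M) SpathG (RT p lam T) n t k) @ \oo -->
          \sum_(n < M) SpathG (fun a b c => Rgen p a b c lam) n t k)%classic.
  apply: cvg_big; first exact: add_continuous.
  by move=> n _; exact: SpathG_cvg.
rewrite -(cvg_lim (@Rhausdorff R) cv).
apply: limr_le; first exact: cvgP cv.
apply: nearW => T.
under eq_bigr => n _ do rewrite -Spath_G.
exact: (Spath_sum_le p_ge0 p_sum lam_ge0 t T M k lam_lt1).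
Qed.

End Lim2.

Lemma SpathG_ge0 (R : realType) N (Rf : 'I_N -> 'I_N -> bool -> R) n t k :
  (forall a b c, 0 <= Rf a b c) -> 0 <= SpathG Rf n t k.
Proof.
move=> R0; elim: n t k => [|n IH] t k /=; first exact: ler01.
by apply: sumr_ge0 => j _; apply: mulr_ge0.
Qed.


Lemma char_poly_tr (F : fieldType) n (A : 'M[F]_n) : char_poly A^T = char_poly A.
Proof.
rewrite /char_poly /char_poly_mx -det_tr; congr (\det _).
by rewrite raddfB /= tr_scalar_mx -map_trmx trmxK.
Qed.

Lemma mx1E (R : ringType) n (i j : 'I_n) : (1 : 'M[R]_n) i j = (i == j)%:R.
Proof. by rewrite mxE. Qed.

Lemma mulmx_entry_ge (R : realType) n (A B : 'M[R]_n) a b c :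
  (forall x y, 0 <= A x y) -> (forall x y, 0 <= B x y) ->
  A a c * B c b <= (A * B) a b.
Proof.
move=> A0 B0; rewrite -mulmxE mxE (bigD1 c) //= lerDl.
by apply: sumr_ge0 => d _; apply: mulr_ge0.
Qed.

Lemma mulmx_ge0 (R : realType) n (A B : 'M[R]_n) a b :
  (forall x y, 0 <= A x y) -> (forall x y, 0 <= B x y) -> 0 <= (A * B) a b.
Proof.
move=> A0 B0; rewrite -mulmxE mxE.
by apply: sumr_ge0 => d _; apply: mulr_ge0.
Qed.

Lemma expmx_ge0 (R : realType) n (A : 'M[R]_n) m a b :
  (forall x y, 0 <= A x y) -> 0 <= (A ^+ m) a b.
Proof.
move=> A0; elim: m a b => [|m IH] a b; first by rewrite expr0 mx1E ler0n.
by rewrite exprS; apply: mulmx_ge0.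
Qed.

Lemma normc_ge0 (R : rcfType) (x : R[i]) : 0 <= ComplexField.Normc.normc x.
Proof. by case: x => a b; rewrite /= sqrtr_ge0. Qed.

Lemma normc_real (R : rcfType) (x : R) : 0 <= x -> ComplexField.Normc.normc (x%:C)%C = x.
Proof. by move=> x0; rewrite /= expr0n /= addr0 sqrtr_sqr ger0_norm. Qed.

Lemma normc_sum (R : rcfType) (I : Type) (r : seq I) (P : pred I) (F : I -> R[i]) :
  ComplexField.Normc.normc (\sum_(i <- r | P i) F i) <= \sum_(i <- r | P i) ComplexField.Normc.normc (F i).
Proof.
apply: (big_ind2 (fun x y => ComplexField.Normc.normc x <= y)).
- by rewrite ComplexField.Normc.normc0.
- move=> x1 x2 y1 y2 h1 h2; apply: le_trans (le_normcD _ _) _.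
  exact: lerD.
- by [].
Qed.

Lemma geo_bound (R : realType) (r lam : R) : 0 <= r -> 0 <= lam < 1 ->
  (forall M, \sum_(m < M) r ^+ m <= (1 - lam)^-1) -> r <= lam.
Proof.
move=> r0 /andP[l0 l1] hs.
set s := Num.min r ((1 + lam) / 2).
have s0 : 0 <= s by rewrite /s le_min r0 divr_ge0 // addr_ge0.
have s1 : s < 1.
  rewrite /s gt_min; apply/orP; right.
  by rewrite ltr_pdivrMr // mul1r -[X in _ < X]/(1 + 1) ltrD2l.
have sl : s <= lam.
  have cv := @cvg_geometric_series R 1 s; rewrite ger0_norm // in cv.
  have {cv} cv := cv s1.
  have : 1 * (1 - s)^-1 <= (1 - lam)^-1.
    rewrite -(cvg_lim (@Rhausdorff R) cv); apply: limr_le; first exact: cvgP cv.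
    apply: nearW => M /=; rewrite /series /geometric /=.
    apply: le_trans (hs M); rewrite big_mkord; apply: ler_sum => m _.
    by rewrite mul1r lerXn2r // ?nnegrE // /s ge_min lexx.
  rewrite mul1r lef_pV2 ?posrE ?subr_gt0 //.
  by rewrite lerD2l lerN2.
move: sl; rewrite /s ge_min => /orP[//|h].
exfalso; move: h; apply/negP; rewrite -ltNge.
by rewrite ltr_pdivlMr // mulrDr mulr1 ltrD2r.
Qed.

Lemma eig_bound (R : realType) n (K : 'M[R]_n) (w : nat -> 'I_n -> R) (lam : R) mu :
  (forall a b, 0 <= K a b) -> (forall m a, 0 <= w m a) -> (forall a, w 0%N a = 1) ->
  (forall m a, \sum_b K a b * w m b <= w m.+1 a) ->
  (forall a M, \sum_(m < M) w m a <= (1 - lam)^-1) -> 0 <= lam < 1 ->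
  root (char_poly (map_mx (fun x : R => (x%:C)%C) K)) mu ->
  ComplexField.Normc.normc mu <= lam.
Proof.
move=> K0 w0 w1 wK ws hl.
rewrite -char_poly_tr -eigenvalue_root_char => /eigenvalueP[v hv vn0].
have hrow : forall a, mu * v 0 a = \sum_b v 0 b * ((K a b)%:C)%C.
  move=> a; have := congr1 (fun (M : 'rV_n) => M 0 a) hv; rewrite !mxE => <-.
  by apply: eq_bigr => b _; rewrite !mxE.
set u := fun b => ComplexField.Normc.normc (v 0 b).
have u0 : forall b, 0 <= u b by move=> b; exact: normc_ge0.
have hu : forall a, ComplexField.Normc.normc mu * u a <= \sum_b K a b * u b.
  move=> a; rewrite /u -ComplexField.Normc.normcM hrow.
  apply: le_trans (normc_sum _ _ _) _; apply: ler_sum => b _.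
  by rewrite ComplexField.Normc.normcM normc_real // mulrC.
have [a0 va0] : exists a, v 0 a != 0.
  apply/existsP; apply: contraR vn0 => /existsPn h.
  by apply/eqP/rowP => a; rewrite mxE; apply/eqP; rewrite -[_ == _]negbK h.
case: (@arg_maxP _ R _ a0 predT u isT) => amax _ hmax.
set U := u amax.
have Upos : 0 < U.
  apply: lt_le_trans (hmax a0 isT); rewrite lt_def normc_ge0 andbT.
  by apply/eqP => /ComplexField.Normc.eq0_normc /eqP; apply/negP.
set r := ComplexField.Normc.normc mu.
have r0 : 0 <= r by exact: normc_ge0.
have hind : forall m a, r ^+ m * u a <= U * w m a.
  elim=> [|m IH] a; first by rewrite expr0 mul1r w1 mulr1; exact: hmax.
  rewrite exprSr -mulrA.
  apply: le_trans (ler_wpM2l (exprn_ge0 _ r0) (hu a)) _.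
  apply: le_trans (ler_wpM2l (ltW Upos) (wK m a)).
  rewrite !mulr_sumr; apply: ler_sum => b _.
  rewrite mulrCA [U * _]mulrCA; apply: ler_wpM2l => //.
have hsum : forall M, \sum_(m < M) r ^+ m <= (1 - lam)^-1.
  move=> M; apply: le_trans (ws amax M); apply: ler_sum => m _.
  have := hind m amax; rewrite -/U mulrC.
  by rewrite ler_pM2l.
exact: geo_bound r0 hl hsum.
Qed.


Unset Implicit Arguments. Set Strict Implicit. Set Printing Implicit Defensive.

Lemma third_idx N (hN : (3 <= N)%N) (i l : 'I_N) : exists j : 'I_N, (j != i) && (j != l).
Proof.
have : (0 < #|[set: 'I_N] :\ i :\ l|)%N.
  have h1 := cardsD1 l ([set: 'I_N] :\ i).
  have h2 := cardsD1 i [set: 'I_N].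
  rewrite cardsT card_ord in h2.
  move: h1 h2; set c1 := #|_ :\ l|; set c2 := #|_ :\ i|.
  case: (l \in _); case: (i \in _) => /=; lia.
case/card_gt0P => j; rewrite !inE => /andP[jl /andP[ji _]].
by exists j; rewrite ji jl.
Qed.

Theorem proposition5p8 (R : realType) (N : nat) (hN : (3 <= N)%N)
  (p : 'I_N -> 'I_N -> bool -> R)
  (hp : forall (i j : 'I_N) (k : bool), i != j -> 0 < p i j k < 1)
  (hsum : forall i : 'I_N, \sum_(j < N | j != i) (p i j true + p i j false) = 1)
  (len : 'I_N -> 'I_N -> bool -> R)
  (hlen : forall i j k, 0 <= len i j k) :
  (forall lam z : R, 0 < lam <= 1 -> 0 < z <= 1 ->
     nonneg_mx (Kmx p len lam z) /\ irreducible_mx (Kmx p len lam z)) /\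
  (forall lam z : R, 0 < lam < 1 -> 0 < z <= 1 ->
     spectral_radius (Kmx p len lam z) < 1).
Proof.
have p_ge0 : forall i j k, i != j -> 0 <= p i j k.
  by move=> i j k ij; case/andP: (hp i j k ij) => /ltW.
have p_sum : forall i, \sum_(j < N | j != i) \sum_(k : bool) p i j k = 1.
  by move=> i; rewrite -(hsum i); apply: eq_bigr => j _; rewrite big_bool.
have idxP : forall a : 'I_(N + N), (exists i, a = lshift N i) \/ (exists i, a = rshift N i).
  by move=> a; rewrite -(fintype.splitK a); case: (fintype.split a) => i; [left|right]; exists i.
have BE : forall k lam z i j, Bmx p len k lam z i j =
    (1 - (i == j)%:R) * z `^ len i j k * Rgen p i j k lam by move=> *; rewrite mxE.
have Bge0 : forall k lam z i j, 0 <= lam <= 1 -> 0 <= Bmx p len k lam z i j.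
  move=> k lam z i j /andP[l0 l1]; rewrite BE.
  case: eqP => [_|_]; first by rewrite subrr !mul0r.
  by rewrite subr0 mul1r mulr_ge0 ?powR_ge0 // (Rgen_ge0 p_ge0 p_sum).
have Ktt : forall lam z i j, Kmx p len lam z (lshift N i) (lshift N j) = 0.
  by move=> *; rewrite /Kmx block_mxEul mxE.
have Ktb : forall lam z i j, Kmx p len lam z (lshift N i) (rshift N j) = Bmx p len true lam z i j.
  by move=> *; rewrite /Kmx block_mxEur.
have Kbt : forall lam z i j, Kmx p len lam z (rshift N i) (lshift N j) = Bmx p len false lam z i j.
  by move=> *; rewrite /Kmx block_mxEdl.
have Kbb : forall lam z i j, Kmx p len lam z (rshift N i) (rshift N j) = 0.
  by move=> *; rewrite /Kmx block_mxEdr mxE.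
have Kge0 : forall lam z a b, 0 <= lam <= 1 -> 0 <= Kmx p len lam z a b.
  move=> lam z a b hl.
  case: (idxP a) => [[i ->]|[i ->]]; case: (idxP b) => [[j ->]|[j ->]];
    by rewrite ?Ktt ?Ktb ?Kbt ?Kbb ?lexx ?Bge0.
split.
  move=> lam z /andP[l0 l1] /andP[z0 z1].
  have hl : 0 <= lam <= 1 by rewrite ltW.
  split; first by move=> a b; apply: Kge0.
  have Bpos : forall k i j, i != j -> 0 < Bmx p len k lam z i j.
    move=> k i j ij; rewrite BE (negbTE ij) subr0 mul1r mulr_gt0 ?powR_gt0 //.
    apply: (Rgen_pos p_ge0 p_sum) => //; first exact: ltW.
    by case/andP: (hp i j k ij).
  set K := Kmx p len lam z.
  have K0 : forall a b, 0 <= K a b by move=> a b; apply: Kge0.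
  have K2 : forall a b c, 0 < K a c -> 0 < K c b -> 0 < (K ^+ 2) a b.
    move=> a b c h1 h2; rewrite expr2.
    by apply: lt_le_trans (@mulmx_entry_ge _ _ K K a b c K0 K0); apply: mulr_gt0.
  have K3 : forall a b c d, 0 < K a c -> 0 < K c d -> 0 < K d b -> 0 < (K ^+ 3) a b.
    move=> a b c d h1 h2 h3; rewrite exprS.
    apply: lt_le_trans (@mulmx_entry_ge _ _ K (K ^+ 2) a b c K0 (fun x y => expmx_ge0 2 x y K0)).
    by apply: mulr_gt0 => //; apply: K2 h3.
  have K1 : forall a b, 0 < K a b -> 0 < (K ^+ 1) a b by move=> a b; rewrite expr1.
  have Kid : forall a, 0 < (K ^+ 0) a a by move=> a; rewrite expr0 mx1E eqxx ltr01.
  have Ptb : forall i j, i != j -> 0 < K (lshift N i) (rshift N j) by move=> i j ij; rewrite /K Ktb Bpos.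
  have Pbt : forall i j, i != j -> 0 < K (rshift N i) (lshift N j) by move=> i j ij; rewrite /K Kbt Bpos.
  move=> a b.
  case: (idxP a) => [[i ->]|[i ->]]; case: (idxP b) => [[l ->]|[l ->]].
  - case: (eqVneq i l) => [<-|il]; first by exists 0%N.
    have [j /andP[ji jl]] := @third_idx _ hN i l.
    by exists 2%N; apply: (K2 _ _ (rshift N j)); [apply: Ptb; rewrite eq_sym|apply: Pbt].
  - case: (eqVneq i l) => [<-|il]; last by exists 1%N; apply: K1; apply: Ptb.
    have [j /andP[ji _]] := @third_idx _ hN i i.
    have [j' /andP[j'j j'i]] := @third_idx _ hN j i.
    exists 3%N; apply: (K3 _ _ (rshift N j) (lshift N j')).
    + by apply: Ptb; rewrite eq_sym.
    + by apply: Pbt; rewrite eq_sym.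
    + exact: Ptb.
  - case: (eqVneq i l) => [<-|il]; last by exists 1%N; apply: K1; apply: Pbt.
    have [j /andP[ji _]] := @third_idx _ hN i i.
    have [j' /andP[j'j j'i]] := @third_idx _ hN j i.
    exists 3%N; apply: (K3 _ _ (lshift N j) (rshift N j')).
    + by apply: Pbt; rewrite eq_sym.
    + by apply: Ptb; rewrite eq_sym.
    + exact: Pbt.
  - case: (eqVneq i l) => [<-|il]; first by exists 0%N.
    have [j /andP[ji jl]] := @third_idx _ hN i l.
    by exists 2%N; apply: (K2 _ _ (lshift N j)); [apply: Pbt; rewrite eq_sym|apply: Ptb].
move=> lam z /andP[l0 l1] /andP[z0 z1].
have hl : 0 <= lam <= 1 by rewrite ltW // ltW.
set K := Kmx p len lam z.
set Rf := fun a b c => Rgen p a b c lam.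
have Rf0 : forall a b c, 0 <= Rf a b c by move=> a b c; apply: (Rgen_ge0 p_ge0 p_sum); rewrite ?ltW.
set w := fun m (a : 'I_(N + N)) => match fintype.split a with
  | inl i => SpathG Rf m i true | inr i => SpathG Rf m i false end.
have wl : forall m j, w m (lshift N j) = SpathG Rf m j true.
  by move=> m j; rewrite /w -[lshift N j]/(unsplit (inl j)) unsplitK.
have wr : forall m j, w m (rshift N j) = SpathG Rf m j false.
  by move=> m j; rewrite /w -[rshift N j]/(unsplit (inr j)) unsplitK.
have Ble : forall k i j, Bmx p len k lam z i j <= (i != j)%:R * Rf i j k.
  move=> k i j; rewrite BE; case: eqP => [_|_]; first by rewrite subrr !mul0r.
  rewrite subr0 !mul1r ler_piMl //; first exact: Rf0.
  rewrite -[X in _ <= X](powRr0 z); apply: ger_powR => //.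
  by rewrite z0 z1.
have key : forall mu, eigenvalueC K mu -> ComplexField.Normc.normc mu <= lam.
  move=> mu; apply: (@eig_bound _ _ K w lam mu).
  - by move=> a b; apply: Kge0.
  - by move=> m a; rewrite /w; case: fintype.split => x; apply: SpathG_ge0.
  - by move=> a; rewrite /w; case: fintype.split.
  - move=> m a; case: (idxP a) => [[i ->]|[i ->]]; rewrite big_split_ord /=.
    + rewrite big1 ?add0r; last by move=> j _; rewrite /K Ktt mul0r.
      rewrite (bigD1 i) //= /K Ktb.
      rewrite BE eqxx subrr !mul0r add0r wl /=.
      apply: ler_sum => j ji; rewrite Ktb wr.
      apply: ler_wpM2r; first exact: SpathG_ge0.
      by apply: le_trans (Ble true i j) _; rewrite eq_sym ji mul1r.
    + rewrite [X in _ + X]big1 ?addr0; last by move=> j _; rewrite /K Kbb mul0r.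
      rewrite (bigD1 i) //= /K Kbt.
      rewrite BE eqxx subrr !mul0r add0r wr /=.
      apply: ler_sum => j ji; rewrite Kbt wl.
      apply: ler_wpM2r; first exact: SpathG_ge0.
      by apply: le_trans (Ble false i j) _; rewrite eq_sym ji mul1r.
  - move=> a M; case: (idxP a) => [[i ->]|[i ->]].
    + under eq_bigr do rewrite wl.
      exact: (SpathG_sum_le p_ge0 p_sum (ltW l0) l1).
    + under eq_bigr do rewrite wr.
      exact: (SpathG_sum_le p_ge0 p_sum (ltW l0) l1).
  - by rewrite (ltW l0) l1.
rewrite /spectral_radius; set S := (X in sup X).
have ub : forall x, S x -> x <= lam by move=> x [mu hmu <-]; exact: key.
case: (pselect (S !=set0)%classic) => [ne|e].
  by apply: le_lt_trans (ge_sup ne ub) l1.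
have -> : S = set0%classic.
  by apply/seteqP; split => x // Sx; apply: e; exists x.
by rewrite sup0 ltr01.
Qed.
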